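(* Consider any private information delivery scheme (with $K$ messages, $N$ servers, $M$ messages per server, message length $L$) and any $k\in\{1,\dots,K\}$. Let $\mathcal{N}_k\subseteq\{1,\dots,N\}$ be the set of servers storing $W_k$, i.e. $W_k\in S_j$ for all $j\in\mathcal{N}_k$ and $W_k\notin S_l$ for all $l\notin\mathcal{N}_k$. Then $$\sum_{n\in\mathcal{N}_k} D_n \ge L.$$
   Context: A PID scheme: There are $K$ independent messages $W_1,\dots,W_K$, each consisting of $L$ i.i.d. uniform symbols from a finite field $\mathbb{F}_p$, so that (in $p$-ary units) $H(W_k)=L$ for all $k$ and $H(W_1,\dots,W_K)=\sum_k H(W_k)$. There are $N$ servers; server $n$ stores $S_n=\{W_k : k\in\mathcal{S}_n\}$ for some $\mathcal{S}_n\subset\{1,\dots,K\}$ with $|\mathcal{S}_n|=M$. The servers share a common random variable $Z$ with $H(Z,W_1,\dots,W_K)=H(Z)+\sum_kH(W_k)$. For each $k$, server $n$ sends an answer $A_n^{[k]}$ that is a deterministic function of $(S_n,Z)$ and consists of $D_n$ symbols of $\mathbb{F}_p$ ($D_n$ independent of $k$). Correctness: $H(W_k\mid A_1^{[k]},\dots,A_N^{[k]})=0$ for all $k$. Privacy: for all $k$, $(A_1^{[1]},\dots,A_N^{[1]},W_1)$ and $(A_1^{[k]},\dots,A_N^{[k]},W_k)$ are identically distributed. *)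

(* Defs.v *)
From HB Require Import structures.
From mathcomp Require Import all_boot all_order all_algebra.
From mathcomp Require Import reals exp.
Set Implicit Arguments. Unset Strict Implicit. Unset Printing Implicit Defensive.
Import Order.TTheory GRing.Theory Num.Theory.
Local Open Scope ring_scope.

Definition msgs (p K L : nat) := {ffun 'I_K -> 'rV['F_p]_L}.

(* Sample space: (W_1..W_K, Z).  The messages are uniform on msgs (i.e. all
   K*L symbols are i.i.d. uniform on F_p) and independent of Z, whose law is PZ. *)
Definition omega (p K L : nat) (Zt : finType) := (msgs p K L * Zt)%type.

Section Prob.
Variables (R : realType) (p K L : nat) (Zt : finType) (PZ : {ffun Zt -> R}).

Definition Pr (om : omega p K L Zt) : R := PZ om.2 / #|{: msgs p K L}|%:R.

Definition pmf (T : finType) (X : omega p K L Zt -> T) (x : T) : R :=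
  \sum_(om | X om == x) Pr om.

(* entropy in p-ary units, with 0 log 0 = 0 *)
Definition entropy (T : finType) (X : omega p K L Zt -> T) : R :=
  - \sum_(x : T) (if pmf X x == 0 then 0
                  else pmf X x * (ln (pmf X x) / ln p%:R)).

Definition condEntropy (T U : finType) (X : omega p K L Zt -> T)
  (Y : omega p K L Zt -> U) : R :=
  entropy (fun om => (X om, Y om)) - entropy Y.
End Prob.

Definition answers (p K L N : nat) (Zt : finType) (D : 'I_N -> nat)
  (A : forall (k : 'I_K) (n : 'I_N), msgs p K L -> Zt -> 'rV['F_p]_(D n))
  (k : 'I_K) (om : omega p K L Zt) : {dffun forall n : 'I_N, 'rV['F_p]_(D n)} :=
  [ffun n => A k n om.1 om.2].

Definition is_PID_scheme (R : realType) (p K N M L : nat) (Zt : finType)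
  (PZ : {ffun Zt -> R}) (Sset : 'I_N -> {set 'I_K}) (D : 'I_N -> nat)
  (A : forall (k : 'I_K) (n : 'I_N), msgs p K L -> Zt -> 'rV['F_p]_(D n)) : Prop :=
  [/\ prime p,
      (forall z, 0 <= PZ z) /\ \sum_z PZ z = 1,
      (forall n, #|Sset n| = M) /\
      (* A_n^[k] is a deterministic function of (S_n, Z) *)
      (forall k n (w w' : msgs p K L) z,
          (forall j, j \in Sset n -> w j = w' j) -> A k n w z = A k n w' z),
      (forall k, condEntropy PZ (fun om : omega p K L Zt => om.1 k)
                   (answers A k) = 0) &
      (forall k k', pmf PZ (fun om : omega p K L Zt => (answers A k om, om.1 k))
                  = pmf PZ (fun om : omega p K L Zt => (answers A k' om, om.1 k')))].

(* Main.v *)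
Require Import Defs.
From HB Require Import structures.
From mathcomp Require Import all_boot all_order all_algebra.
From mathcomp Require Import reals exp.
From mathcomp Require Import lra.
Set Implicit Arguments. Unset Strict Implicit. Unset Printing Implicit Defensive.
Import Order.TTheory GRing.Theory Num.Theory.
Local Open Scope ring_scope.

Section Aux.
Variables (R : realType) (p K L : nat) (Zt : finType) (PZ : {ffun Zt -> R}).
Hypothesis PZ0 : forall z, 0 <= PZ z.

Lemma Pr_ge0 (om : omega p K L Zt) : 0 <= Pr PZ om.
Proof. by rewrite /Pr divr_ge0. Qed.

Lemma pmf_ge0 (T : finType) (X : omega p K L Zt -> T) x : 0 <= pmf PZ X x.
Proof. by apply: sumr_ge0 => om _; apply: Pr_ge0. Qed.

Lemma pmf_ge_Pr (T : finType) (X : omega p K L Zt -> T) om :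
  Pr PZ om <= pmf PZ X (X om).
Proof.
rewrite /pmf (bigD1 om) //= lerDl; apply: sumr_ge0 => o _; exact: Pr_ge0.
Qed.

Lemma entropyE (T : finType) (X : omega p K L Zt -> T) :
  entropy PZ X = - \sum_x pmf PZ X x * (ln (pmf PZ X x) / ln p%:R).
Proof.
rewrite /entropy; congr (- _); apply: eq_bigr => x _.
by case: eqP => // ->; rewrite mul0r.
Qed.

Lemma det (T U : finType) (X : omega p K L Zt -> T) (Y : omega p K L Zt -> U) :
  prime p -> condEntropy PZ X Y = 0 ->
  forall om1 om2, 0 < Pr PZ om1 -> 0 < Pr PZ om2 -> Y om1 = Y om2 ->
  X om1 = X om2.
Proof.
move=> pp.
set c := ln (p%:R : R).
have c0 : 0 < c by apply: ln_gt0; rewrite ltr1n prime_gt1.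
set P2 := pmf PZ (fun om => (X om, Y om)).
set P1 := pmf PZ Y.
have marg y : P1 y = \sum_x P2 (x, y).
  rewrite /P1 /P2 /pmf (partition_big X xpredT) //=.
  apply: eq_bigr => x _; apply: eq_bigl => om.
  by rewrite xpair_eqE andbC.
have key : condEntropy PZ X Y =
   \sum_y \sum_x (P2 (x,y) * ((ln (P1 y) - ln (P2 (x,y))) / c)).
  rewrite /condEntropy !entropyE -/c -/P2 -/P1.
  have -> : \sum_(xy : T * U) P2 xy * (ln (P2 xy) / c) =
            \sum_y \sum_x P2 (x, y) * (ln (P2 (x, y)) / c).
    by rewrite exchange_big pair_big; apply: eq_bigr => -[].
  rewrite opprK addrC -sumrB; apply: eq_bigr => y _.
  rewrite {1}marg big_distrl -sumrB /=; apply: eq_bigr => x _.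
  by rewrite -mulrBr -mulrBl.
have pos2 x y : P2 (x, y) != 0 -> 0 < P2 (x, y).
  by move=> nz; rewrite lt0r nz pmf_ge0.
have le2 x y : P2 (x, y) <= P1 y.
  rewrite marg (bigD1 x) //= lerDl; apply: sumr_ge0 => i _; exact: pmf_ge0.
have hge0 y x : 0 <= P2 (x,y) * ((ln (P1 y) - ln (P2 (x,y))) / c).
  have [->|nz] := eqVneq (P2 (x,y)) 0; first by rewrite mul0r.
  have ps := pos2 _ _ nz.
  apply: mulr_ge0; first exact: ltW.
  apply: divr_ge0; last exact: ltW.
  rewrite subr_ge0 ler_ln ?posrE //; exact: lt_le_trans (le2 x y).
move=> H0 om1 om2 p1 p2 eY.
apply/eqP; apply: contraT => neq.
have zero y x : P2 (x,y) * ((ln (P1 y) - ln (P2 (x,y))) / c) = 0.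
  move: H0; rewrite key => /psumr_eq0P H.
  have H1 := H (fun i _ => sumr_ge0 _ (fun x _ => hge0 i x)) y isT.
  by move/psumr_eq0P: H1 => /(_ (fun x _ => hge0 y x) x isT).
set y := Y om1.
have a1 : 0 < P2 (X om1, y) by exact: lt_le_trans p1 (pmf_ge_Pr _ om1).
have a2 : 0 < P2 (X om2, y) by rewrite /y eY; exact: lt_le_trans p2 (pmf_ge_Pr _ om2).
have := zero y (X om1) => /eqP; rewrite mulf_eq0 (gt_eqF a1) /= mulf_eq0 invr_eq0 (gt_eqF c0) orbF.
rewrite subr_eq0 => /eqP E.
have {E} := ln_inj (_ : P1 y \in Num.pos) (_ : P2 (X om1, y) \in Num.pos) E.
rewrite !posrE => /(_ (lt_le_trans a1 (le2 _ _)) a1).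
rewrite marg (bigD1 (X om1)) //= (bigD1 (X om2)) /=; last by rewrite eq_sym.
have : 0 <= \sum_(i | (i != X om1) && (i != X om2)) P2 (i, y).
  by apply: sumr_ge0 => i _; exact: pmf_ge0.
lra.
Qed.
End Aux.

Theorem lemma1 (R : realType) (p K N M L : nat) (Zt : finType)
  (PZ : {ffun Zt -> R}) (Sset : 'I_N -> {set 'I_K}) (D : 'I_N -> nat)
  (A : forall (k : 'I_K) (n : 'I_N), msgs p K L -> Zt -> 'rV['F_p]_(D n)) :
  @is_PID_scheme R p K N M L Zt PZ Sset D A ->
  forall k : 'I_K, (L <= \sum_(n : 'I_N | k \in Sset n) D n)%N.
Proof.
move=> [pp [PZ0 PZ1] [_ Aloc] corr _] k.
have [z Pz] : exists z, 0 < PZ z.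
  apply/existsP; apply: contraT; rewrite negb_exists => /forallP H.
  move: PZ1; rewrite big1 => [/eqP|z _]; first by rewrite eq_sym oner_eq0.
  by apply/le_anti; rewrite PZ0 andbT leNgt H.
pose w (v : 'rV['F_p]_L) : msgs p K L := [ffun j => if j == k then v else 0].
pose f v := answers A k (w v, z).
have Prpos v : 0 < Pr PZ (w v, z).
  rewrite /Pr divr_gt0 // ltr0n; apply/card_gt0P; by exists (w 0).
have finj : injective f.
  move=> v1 v2 e.
  have := det PZ0 pp (corr k) (Prpos v1) (Prpos v2) e.
  by rewrite /= !ffunE eqxx.
pose F n : pred 'rV['F_p]_(D n) :=
  if k \in Sset n then predT else pred1 (f 0 n).
have fam v : f v \in family F.
  apply/familyP => n; rewrite /F; case: ifP => // kn.
  rewrite inE /f /answers !ffunE /=; apply/eqP; apply: Aloc => j jn.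
  rewrite !ffunE; case: eqP => // ejk; by rewrite -ejk jn in kn.
have : (#|{: 'rV['F_p]_L}| <= #|(family F : simpl_pred {dffun forall n : 'I_N, 'rV['F_p]_(D n)})|)%N.
  rewrite -(card_image finj); apply: subset_leq_card; apply/subsetP => a.
  by move=> /imageP [v _ ->]; exact: fam.
rewrite card_family card_mx card_Fp // mul1n foldrE big_map big_enum /=.
rewrite (eq_bigr (fun n => if k \in Sset n then p ^ D n else 1)%N); last first.
  move=> n _; rewrite /F; case: ifP => _; last by rewrite card1.
  have -> : #|(predT : pred 'rV['F_p]_(D n))| = #|{: 'rV['F_p]_(D n)}| by apply: eq_card.
  by rewrite card_mx card_Fp // mul1n.
by rewrite -big_mkcond -expn_sum leq_exp2l // prime_gt1.
Qed.
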